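(* For every formula $\phi$ of classical modal team logic $\mathcal{ML}$ and every letter $p$, there is a formula $\theta\in\mathcal{ML}$ equivalent to $\tilde\exists p\,\phi$ in team semantics, i.e. for every team model $(M,X)$: $(M,X)\models\theta$ iff there is a team model $(N,Y)$ with $(N,Y)\rightleftharpoons_{\mathcal L(\phi)\setminus\{p\}}(M,X)$ and $(N,Y)\models\phi$.
   Context: Kripke models $M=(W,R,V)$, $V:W\to\mathcal P(Prop)$; team models $(M,X)$, $X\subseteq W$. Formulas of $\mathcal{ML}$: $p,\neg p,\bot,\wedge,\otimes,\Diamond,\Box$, with team semantics: $(M,X)\models p$ iff $p\in V(s)$ for all $s\in X$; $\neg p$ iff $p\notin V(s)$ for all $s\in X$; $\bot$ iff $X=\emptyset$; $\wedge$ componentwise; $\otimes$: $X=X_1\cup X_2$ with $(M,X_i)\models\alpha_i$; $(M,X)\models\Diamond\alpha$ iff $(M,Y)\models\alpha$ for some $Y$ such that every $x\in X$ has an $R$-successor in $Y$ and every $y\in Y$ is an $R$-successor of some $x\in X$; $(M,X)\models\Box\alpha$ iff $(M,R[X])\models\alpha$, $R[X]$ the set of successors of elements of $X$. $\mathcal L(\phi)$ is the set of letters in $\phi$. $(M,w)\rightleftharpoons_{\mathcal P}(N,v)$: there is a relation containing $(w,v)$ whose pairs agree on letters of $\mathcal P$ and satisfy forth and back conditions; $(M,X)\rightleftharpoons_{\mathcal P}(N,Y)$: each $x\in X$ is $\mathcal P$-bisimilar to some $y\in Y$ and each $y\in Y$ to some $x\in X$. *)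

(* Defs.v *)
From Stdlib Require Import List Arith.
Unset Implicit Arguments.

Definition letter := nat.

Record kmodel : Type := KModel {
  world : Type;
  rel : world -> world -> Prop;
  val : world -> letter -> Prop
}.

Definition team (M : kmodel) := world M -> Prop.

Inductive form : Type :=
| FAtom : letter -> form
| FNAtom : letter -> form
| FBot : form
| FAnd : form -> form -> form
| FOtimes : form -> form -> form
| FDia : form -> form
| FBox : form -> form.

Fixpoint letters (phi : form) : list letter :=
  match phi with
  | FAtom p | FNAtom p => p :: nil
  | FBot => nil
  | FAnd a b | FOtimes a b => letters a ++ letters b
  | FDia a | FBox a => letters a
  end.

Fixpoint tsat (M : kmodel) (phi : form) (X : team M) : Prop :=
  match phi with
  | FAtom p => forall s, X s -> val M s p
  | FNAtom p => forall s, X s -> ~ val M s p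
  | FBot => forall s, ~ X s
  | FAnd a b => tsat M a X /\ tsat M b X
  | FOtimes a b => exists X1 X2 : team M,
      (forall s, X s <-> (X1 s \/ X2 s)) /\ tsat M a X1 /\ tsat M b X2
  | FDia a => exists Y : team M,
      (forall x, X x -> exists y, Y y /\ rel M x y) /\
      (forall y, Y y -> exists x, X x /\ rel M x y) /\
      tsat M a Y
  | FBox a => tsat M a (fun y => exists x, X x /\ rel M x y)
  end.

Definition bisim_pt (P : letter -> Prop) (M N : kmodel) (w : world M) (v : world N) : Prop :=
  exists Z : world M -> world N -> Prop,
    Z w v /\
    forall a b, Z a b ->
      (forall q, P q -> (val M a q <-> val N b q)) /\
      (forall a', rel M a a' -> exists b', rel N b b' /\ Z a' b') /\
      (forall b', rel N b b' -> exists a', rel M a a' /\ Z a' b').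

Definition bisim_team (P : letter -> Prop) (M : kmodel) (X : team M)
    (N : kmodel) (Y : team N) : Prop :=
  (forall x, X x -> exists y, Y y /\ bisim_pt P M N x y) /\
  (forall y, Y y -> exists x, X x /\ bisim_pt P M N x y).

Definition letters_minus (phi : form) (p : letter) : letter -> Prop :=
  fun q => In q (letters phi) /\ q <> p.

(* Main.v *)
Require Import Defs.
From Stdlib Require Import List Arith Lia Classical ClassicalEpsilon.
Import ListNotations.

Fixpoint sat (M : kmodel) (w : world M) (f : form) : Prop :=
  match f with
  | FAtom q => val M w q
  | FNAtom q => ~ val M w q
  | FBot => False
  | FAnd a b => sat M w a /\ sat M w b
  | FOtimes a b => sat M w a \/ sat M w b
  | FDia a => exists w', rel M w w' /\ sat M w' a
  | FBox a => forall w', rel M w w' -> sat M w' a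
  end.

Lemma tsat_sat : forall f M X, tsat M f X <-> forall x, X x -> sat M x f.
Proof.
  induction f; intros M X; simpl.
  - tauto.
  - tauto.
  - firstorder.
  - rewrite IHf1, IHf2. firstorder.
  - split.
    + intros (X1 & X2 & HX & H1 & H2) x Hx.
      apply HX in Hx as [Hx|Hx]; [left; rewrite IHf1 in H1 | right; rewrite IHf2 in H2]; auto.
    + intros H. exists (fun x => X x /\ sat M x f1), (fun x => X x /\ sat M x f2).
      split; [|split].
      * intros s; split; [intros Hs; specialize (H s Hs); tauto | tauto].
      * rewrite IHf1; tauto.
      * rewrite IHf2; tauto.
  - split.
    + intros (Y & H1 & H2 & H3) x Hx. rewrite IHf in H3.
      destruct (H1 x Hx) as (y & Hy & Hr). eauto.
    + intros H. exists (fun y => (exists x, X x /\ rel M x y) /\ sat M y f).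
      split; [|split].
      * intros x Hx. destruct (H x Hx) as (y & Hr & Hs). exists y. split; [split; [exists x; auto|auto]|auto].
      * intros y [Hy _]. exact Hy.
      * rewrite IHf. tauto.
  - rewrite IHf. firstorder.
Qed.

Fixpoint nbis (P : letter -> Prop) (n : nat) (M N : kmodel) (w : world M) (v : world N) : Prop :=
  (forall q, P q -> (val M w q <-> val N v q)) /\
  match n with
  | 0 => True
  | S m => (forall w', rel M w w' -> exists v', rel N v v' /\ nbis P m M N w' v') /\
           (forall v', rel N v v' -> exists w', rel M w w' /\ nbis P m M N w' v')
  end.

Definition top : form := FOtimes (FAtom 0) (FNAtom 0).

Inductive iok (P : letter -> Prop) : nat -> form -> Prop :=
| iA n q : P q -> iok P n (FAtom q)
| iN n q : P q -> iok P n (FNAtom q)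
| iT n q : iok P n (FOtimes (FAtom q) (FNAtom q))
| iB n : iok P n FBot
| iAnd n a b : iok P n a -> iok P n b -> iok P n (FAnd a b)
| iOr n a b : iok P n a -> iok P n b -> iok P n (FOtimes a b)
| iDia n a : iok P n a -> iok P (S n) (FDia a)
| iBox n a : iok P n a -> iok P (S n) (FBox a).

Lemma nbis_val : forall P m M N w v, nbis P m M N w v -> forall q, P q -> (val M w q <-> val N v q).
Proof. intros P m M N w v H. destruct m; apply H. Qed.

Lemma invariance : forall P n f, iok P n f -> forall m, n <= m ->
  forall M N w v, nbis P m M N w v -> (sat M w f <-> sat N v f).
Proof.
  intros P n f H. induction H; intros m Hm M N w v Hb; simpl.
  - apply (nbis_val _ _ _ _ _ _ Hb); auto.
  - rewrite (nbis_val _ _ _ _ _ _ Hb q H). tauto.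
  - split; intros _; apply classic.
  - tauto.
  - rewrite (IHiok1 m Hm M N w v Hb), (IHiok2 m Hm M N w v Hb). tauto.
  - rewrite (IHiok1 m Hm M N w v Hb), (IHiok2 m Hm M N w v Hb). tauto.
  - destruct m as [|m]; [inversion Hm|]. assert (n <= m) by (apply le_S_n; auto).
    destruct Hb as [_ [Hf Hbk]]. split.
    + intros (w' & Hr & Hs). destruct (Hf w' Hr) as (v' & Hr' & Hb').
      exists v'. split; auto. rewrite <- (IHiok m H0 M N w' v' Hb'). auto.
    + intros (v' & Hr & Hs). destruct (Hbk v' Hr) as (w' & Hr' & Hb').
      exists w'. split; auto. rewrite (IHiok m H0 M N w' v' Hb'). auto.
  - destruct m as [|m]; [inversion Hm|]. assert (n <= m) by (apply le_S_n; auto).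
    destruct Hb as [_ [Hf Hbk]]. split.
    + intros Hs v' Hr. destruct (Hbk v' Hr) as (w' & Hr' & Hb').
      rewrite <- (IHiok m H0 M N w' v' Hb'). auto.
    + intros Hs w' Hr. destruct (Hf w' Hr) as (v' & Hr' & Hb').
      rewrite (IHiok m H0 M N w' v' Hb'). auto.
Qed.

Fixpoint depth (f : form) : nat :=
  match f with
  | FAtom _ | FNAtom _ | FBot => 0
  | FAnd a b | FOtimes a b => Nat.max (depth a) (depth b)
  | FDia a | FBox a => S (depth a)
  end.

Lemma iok_form : forall (P : letter -> Prop) f n, (forall q, In q (letters f) -> P q) ->
  depth f <= n -> iok P n f.
Proof.
  induction f; intros n HP Hd; simpl in *.
  - constructor; auto.
  - constructor; auto.
  - constructor.
  - constructor; [apply IHf1|apply IHf2]; try (intros; apply HP; apply in_or_app; auto); lia.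
  - constructor; [apply IHf1|apply IHf2]; try (intros; apply HP; apply in_or_app; auto); lia.
  - destruct n; [lia|]. constructor. apply IHf; auto. lia.
  - destruct n; [lia|]. constructor. apply IHf; auto. lia.
Qed.

Lemma nbis_mono : forall (P P' : letter -> Prop), (forall q, P' q -> P q) ->
  forall n M N w v, nbis P n M N w v -> nbis P' n M N w v.
Proof.
  intros P P' HP n. induction n; intros M N w v [Ha Hr]; split.
  - intros q Hq; auto.
  - auto.
  - intros q Hq; auto.
  - destruct Hr as [Hf Hb]. split.
    + intros w' H. destruct (Hf w' H) as (v' & ? & ?). eauto.
    + intros v' H. destruct (Hb v' H) as (w' & ? & ?). eauto.
Qed.

Lemma bisim_nbis : forall P M N w v, bisim_pt P M N w v -> forall n, nbis P n M N w v.
Proof.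
  intros P M N w v (Z & Hz & HZ) n. revert w v Hz. induction n; intros w v Hz;
  destruct (HZ _ _ Hz) as (Ha & Hf & Hb); split; auto.
  split.
  - intros w' H. destruct (Hf w' H) as (v' & ? & ?). eauto.
  - intros v' H. destruct (Hb v' H) as (w' & ? & ?). eauto.
Qed.

Fixpoint subseqs {A} (l : list A) : list (list A) :=
  match l with
  | [] => [[]]
  | a :: l => map (cons a) (subseqs l) ++ subseqs l
  end.

Lemma sublist_ex : forall {A} (l : list A) (P : A -> Prop),
  exists l', In l' (subseqs l) /\ forall x, In x l' <-> In x l /\ P x.
Proof.
  induction l as [|a l IH]; intros P; simpl.
  - exists []. simpl. tauto.
  - destruct (IH P) as (l' & Hin & Hl'). destruct (classic (P a)) as [Ha|Ha].
    + exists (a :: l'). split.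
      * apply in_or_app. left. apply in_map. auto.
      * intros x. simpl. rewrite Hl'. split; [intros [<-|?]; tauto|]. intros [[<-|?] ?]; tauto.
    + exists l'. split.
      * apply in_or_app. right. auto.
      * intros x. rewrite Hl'. simpl. split; [tauto|]. intros [[<-|?] ?]; tauto.
Qed.

Fixpoint bigand (l : list form) : form :=
  match l with [] => top | a :: l => FAnd a (bigand l) end.
Fixpoint bigor (l : list form) : form :=
  match l with [] => FBot | a :: l => FOtimes a (bigor l) end.

Lemma sat_bigand : forall M w l, sat M w (bigand l) <-> forall f, In f l -> sat M w f.
Proof.
  induction l; simpl.
  - split; [tauto|]. intros _. apply classic.
  - rewrite IHl. firstorder. subst; auto.
Qed.

Lemma sat_bigor : forall M w l, sat M w (bigor l) <-> exists f, In f l /\ sat M w f.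
Proof.
  induction l; simpl.
  - firstorder.
  - rewrite IHl. firstorder. subst; auto.
Qed.

Lemma iok_bigand : forall P n l, (forall f, In f l -> iok P n f) -> iok P n (bigand l).
Proof. induction l; simpl; intros H; constructor; auto. Qed.
Lemma iok_bigor : forall P n l, (forall f, In f l -> iok P n f) -> iok P n (bigor l).
Proof. induction l; simpl; intros H; constructor; auto. Qed.

Inductive ty : Type := Ty : list letter -> list ty -> ty.

Fixpoint L (Ql : list letter) (n : nat) : list ty :=
  match n with
  | 0 => map (fun T => Ty T []) (subseqs Ql)
  | S m => flat_map (fun T => map (Ty T) (subseqs (L Ql m))) (subseqs Ql)
  end.

Definition lits (Ql T : list letter) : form :=
  bigand (map (fun q => if in_dec Nat.eq_dec q T then FAtom q else FNAtom q) Ql).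

Fixpoint chi (Ql : list letter) (n : nat) (t : ty) : form :=
  match t with Ty T Ss =>
  match n with
  | 0 => lits Ql T
  | S m => FAnd (lits Ql T) (FAnd (bigand (map (fun s => FDia (chi Ql m s)) Ss))
                                  (FBox (bigor (map (chi Ql m) Ss))))
  end end.

Lemma iok_lits : forall (P : letter -> Prop) Ql T n, (forall q, In q Ql -> P q) -> iok P n (lits Ql T).
Proof.
  intros. apply iok_bigand. intros f Hf. apply in_map_iff in Hf as (q & <- & Hq).
  destruct in_dec; constructor; auto.
Qed.

Lemma iok_chi : forall (P : letter -> Prop) Ql, (forall q, In q Ql -> P q) ->
  forall n t, iok P n (chi Ql n t).
Proof.
  intros P Ql HP n. induction n; intros [T Ss]; simpl.
  - apply iok_lits; auto.
  - constructor; [apply iok_lits; auto|constructor].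
    + apply iok_bigand. intros f Hf. apply in_map_iff in Hf as (s & <- & Hs). constructor; auto.
    + constructor. apply iok_bigor. intros f Hf. apply in_map_iff in Hf as (s & <- & Hs). auto.
Qed.

Lemma sat_lits : forall M w Ql T, sat M w (lits Ql T) <->
  forall q, In q Ql -> (In q T -> val M w q) /\ (~ In q T -> ~ val M w q).
Proof.
  intros. unfold lits. rewrite sat_bigand. split.
  - intros H q Hq. specialize (H _ (in_map (fun q => if in_dec Nat.eq_dec q T then FAtom q else FNAtom q) _ _ Hq)). destruct in_dec; simpl in H; tauto.
  - intros H f Hf. apply in_map_iff in Hf as (q & <- & Hq). specialize (H q Hq).
    destruct in_dec; simpl; tauto.
Qed.

Lemma types_a : forall Ql n M w, exists t, In t (L Ql n) /\ sat M w (chi Ql n t).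
Proof.
  intros Ql n. induction n; intros M w.
  - destruct (sublist_ex Ql (fun q => val M w q)) as (T & HT & HTs).
    exists (Ty T []). split; [simpl; apply (in_map (fun T => Ty T [])); auto|].
    simpl. rewrite sat_lits. intros q Hq. rewrite HTs. split; [tauto|].
    intros H1 H2; apply H1; auto.
  - destruct (sublist_ex Ql (fun q => val M w q)) as (T & HT & HTs).
    destruct (sublist_ex (L Ql n) (fun s => exists u, rel M w u /\ sat M u (chi Ql n s)))
      as (S & HS & HSs).
    exists (Ty T S). split.
    + simpl. apply in_flat_map. exists T. split; auto. apply (in_map (Ty T)); auto.
    + simpl. split; [|split].
      * rewrite sat_lits. intros q Hq. rewrite HTs. split; [tauto|].
        intros H1 H2; apply H1; auto.
      * rewrite sat_bigand. intros f Hf. apply in_map_iff in Hf as (s & <- & Hs).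
        apply HSs in Hs as [_ Hs]. exact Hs.
      * intros u Hu. rewrite sat_bigor. destruct (IHn M u) as (s & Hs & Hsat).
        exists (chi Ql n s). split; auto. apply in_map. apply HSs. split; eauto.
Qed.

Lemma types_b : forall Ql n t M N w v, sat M w (chi Ql n t) -> sat N v (chi Ql n t) ->
  nbis (fun q => In q Ql) n M N w v.
Proof.
  intros Ql n. induction n; intros [T Ss] M N w v H1 H2; simpl in *.
  - split; auto. rewrite sat_lits in H1, H2. intros q Hq.
    destruct (H1 q Hq), (H2 q Hq). destruct (in_dec Nat.eq_dec q T); tauto.
  - destruct H1 as (H1 & D1 & B1), H2 as (H2 & D2 & B2). split; [|split].
    + rewrite sat_lits in H1, H2. intros q Hq.
      destruct (H1 q Hq), (H2 q Hq). destruct (in_dec Nat.eq_dec q T); tauto.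
    + intros w' Hr. specialize (B1 w' Hr). rewrite sat_bigor in B1.
      destruct B1 as (f & Hf & Hs). apply in_map_iff in Hf as (s & <- & Hin).
      rewrite sat_bigand in D2. destruct (D2 _ (in_map (fun s => FDia (chi Ql n s)) _ _ Hin))
        as (v' & Hr' & Hs'). exists v'. split; auto. eapply IHn; eauto.
    + intros v' Hr. specialize (B2 v' Hr). rewrite sat_bigor in B2.
      destruct B2 as (f & Hf & Hs). apply in_map_iff in Hf as (s & <- & Hin).
      rewrite sat_bigand in D1. destruct (D1 _ (in_map (fun s => FDia (chi Ql n s)) _ _ Hin))
        as (w' & Hr' & Hs'). exists w'. split; auto. eapply IHn; eauto.
Qed.

Definition prodW (M N : kmodel) : Type := ((nat * world M * world N) + world M)%type.

Definition prodR (P : letter -> Prop) (M N : kmodel) (s s' : prodW M N) : Prop :=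
  match s, s' with
  | inl (S k, a, b), inl (k', a', b') => k' = k /\ rel M a a' /\ rel N b b' /\ nbis P k M N a' b'
  | inl (0, a, _), inr a' => rel M a a'
  | inr a, inr a' => rel M a a'
  | _, _ => False
  end.

Definition prodV (p : letter) (M N : kmodel) (s : prodW M N) (q : letter) : Prop :=
  match s with
  | inl (_, a, b) => if Nat.eq_dec q p then val N b q else val M a q
  | inr a => val M a q
  end.

Definition prodM P p M N : kmodel := KModel (prodW M N) (prodR P M N) (prodV p M N).

Lemma prod_bisim : forall (P : letter -> Prop) p M N, (forall q, P q -> q <> p) ->
  forall k a b, nbis P k M N a b -> bisim_pt P (prodM P p M N) M (inl (k, a, b)) a.
Proof.
  intros P p M N HP k a b Hb.
  exists (fun (s : prodW M N) a0 => match s with inl (k, a, b) => a0 = a /\ nbis P k M N a b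
                           | inr a => a0 = a end).
  split; [auto|].
  intros s a0 Hs. destruct s as [[[k' a'] b']|a']; simpl.
  - destruct Hs as [-> Hn]. split; [|split].
    + intros q Hq. destruct (Nat.eq_dec q p); [exfalso; apply (HP q); auto|tauto].
    + intros s' Hr. destruct k' as [|k'].
      * destruct s' as [[[k2 a2] b2]|a2]; simpl in Hr; [contradiction|]. eauto.
      * destruct s' as [[[k2 a2] b2]|a2]; simpl in Hr; [|contradiction].
        destruct Hr as (-> & H1 & H2 & H3). eauto.
    + intros a2 Hr. destruct k' as [|k'].
      * exists (inr a2). simpl. auto.
      * destruct Hn as (_ & Hf & _). destruct (Hf a2 Hr) as (b2 & Hr2 & Hn2).
        exists (inl (k', a2, b2)). simpl. auto.
  - subst a0. split; [|split].
    + tauto.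
    + intros s' Hr. destruct s' as [[[k2 a2] b2]|a2]; simpl in Hr; [contradiction|]. eauto.
    + intros a2 Hr. exists (inr a2). simpl. auto.
Qed.

Lemma prod_nbis : forall (P : letter -> Prop) p M N k a b, nbis P k M N a b ->
  nbis (fun q => P q \/ q = p) k (prodM P p M N) N (inl (k, a, b)) b.
Proof.
  intros P p M N k. induction k; intros a b Hb.
  - split; auto. intros q Hq. simpl. destruct (Nat.eq_dec q p); [tauto|].
    apply (nbis_val _ _ _ _ _ _ Hb). destruct Hq; tauto.
  - split; [|split].
    + intros q Hq. simpl. destruct (Nat.eq_dec q p); [tauto|].
      apply (nbis_val _ _ _ _ _ _ Hb). destruct Hq; tauto.
    + intros s' Hr. destruct s' as [[[k2 a2] b2]|a2]; simpl in Hr; [|contradiction].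
      destruct Hr as (-> & H1 & H2 & H3). exists b2. split; auto.
    + intros b2 Hr. destruct Hb as (_ & _ & Hbk). destruct (Hbk b2 Hr) as (a2 & Hr2 & Hn2).
      exists (inl (k, a2, b2)). split; [simpl; auto|]. auto.
Qed.

Definition unR {I : Type} (F : I -> kmodel) (s s' : {i : I & world (F i)}) : Prop :=
  exists a', s' = existT _ (projT1 s) a' /\ rel (F (projT1 s)) (projT2 s) a'.
Definition unM {I : Type} (F : I -> kmodel) : kmodel :=
  KModel {i : I & world (F i)} (unR F) (fun s q => val (F (projT1 s)) (projT2 s) q).

Lemma sat_un : forall I (F : I -> kmodel) f i a, sat (unM F) (existT _ i a) f <-> sat (F i) a f.
Proof.
  intros I F f. induction f; intros i a; simpl; try tauto.
  - rewrite IHf1, IHf2; tauto.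
  - rewrite IHf1, IHf2; tauto.
  - split.
    + intros (s' & (a' & -> & Hr) & Hs). simpl in Hr. rewrite IHf in Hs. eauto.
    + intros (a' & Hr & Hs). exists (existT _ i a'). split; [exists a'; simpl; auto|].
      rewrite IHf; auto.
  - split.
    + intros H a' Hr. rewrite <- IHf. apply H. exists a'. simpl. auto.
    + intros H s' (a' & -> & Hr). simpl in *. rewrite IHf. auto.
Qed.

Lemma bisim_un : forall P I (F : I -> kmodel) M i a x, bisim_pt P (F i) M a x ->
  bisim_pt P (unM F) M (existT _ i a) x.
Proof.
  intros P I F M i a x (Z & Hz & HZ).
  exists (fun s m => exists a, s = existT _ i a /\ Z a m). split; [eauto|].
  intros s m (a0 & -> & Hs). destruct (HZ _ _ Hs) as (Ha & Hf & Hb). simpl. split; [|split].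
  - auto.
  - intros s' (a' & -> & Hr). simpl in Hr. destruct (Hf a' Hr) as (m' & ? & ?). eauto.
  - intros m' Hr. destruct (Hb m' Hr) as (a' & ? & ?). exists (existT _ i a').
    split; [exists a'; simpl; auto|eauto].
Qed.

Lemma bisim_mono : forall (P P' : letter -> Prop), (forall q, P' q -> P q) ->
  forall M N w v, bisim_pt P M N w v -> bisim_pt P' M N w v.
Proof.
  intros P P' HP M N w v (Z & Hz & HZ). exists Z. split; auto.
  intros a b Hab. destruct (HZ a b Hab) as (H1 & H2 & H3). split; auto.
Qed.

Theorem mainTheorem6 : forall (phi : form) (p : letter),
  exists theta : form,
    forall (M : kmodel) (X : team M),
      tsat M theta X <->
      exists (N : kmodel) (Y : team N),
        bisim_team (letters_minus phi p) N Y M X /\ tsat N phi Y.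
Proof.
  intros phi p.
  set (Ql := filter (fun q => negb (Nat.eqb q p)) (letters phi)).
  assert (HQl : forall q, In q Ql <-> letters_minus phi p q).
  { intros q. unfold Ql, letters_minus. rewrite filter_In, Bool.negb_true_iff, Nat.eqb_neq. tauto. }
  set (n := depth phi).
  destruct (sublist_ex (L Ql n) (fun t => exists (N : kmodel) (y : world N),
      sat N y phi /\ sat N y (chi Ql n t))) as (G & _ & HG).
  exists (bigor (map (chi Ql n) G)).
  assert (Hphi : forall (P : letter -> Prop), (forall q, In q (letters phi) -> P q) -> iok P n phi).
  { intros P HP. apply iok_form; auto. }
  intros M X. rewrite tsat_sat. split.
  - intros H.
    assert (Hc : forall x, exists c : {N : kmodel & world N}, X x ->
      bisim_pt (letters_minus phi p) (projT1 c) M (projT2 c) x /\ sat (projT1 c) (projT2 c) phi).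
    { intros x. destruct (classic (X x)) as [Hx|Hx].
      2:{ exists (existT (fun N => world N) (KModel unit (fun _ _ => False) (fun _ _ => False)) tt).
          intros; contradiction. }
      specialize (H x Hx). rewrite sat_bigor in H. destruct H as (f & Hf & Hs).
      apply in_map_iff in Hf as (t & <- & Ht). apply HG in Ht as (_ & N & y & Hy1 & Hy2).
      pose proof (types_b Ql n t M N x y Hs Hy2) as Hb.
      exists (existT (fun N => world N) (prodM (fun q => In q Ql) p M N) (inl (n, x, y))).
      intros _. simpl. split.
      + apply (bisim_mono (fun q => In q Ql)); [intros q; rewrite HQl; auto|].
        apply prod_bisim; auto. intros q Hq. apply HQl in Hq. apply Hq.
      + pose proof (prod_nbis _ p M N n x y Hb) as Hn.
        assert (Hok : iok (fun q => In q Ql \/ q = p) n phi).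
        { apply Hphi. intros q Hq. destruct (Nat.eq_dec q p); [auto|]. left. apply HQl. split; auto. }
        rewrite (invariance _ n phi Hok n (le_n n) _ _ _ _ Hn). auto. }
    set (F := fun x => proj1_sig (constructive_indefinite_description _ (Hc x))).
    assert (HF : forall x, X x -> bisim_pt (letters_minus phi p) (projT1 (F x)) M (projT2 (F x)) x
                                  /\ sat (projT1 (F x)) (projT2 (F x)) phi).
    { intros x. exact (proj2_sig (constructive_indefinite_description _ (Hc x))). }
    exists (unM (fun x => projT1 (F x))).
    exists (fun s => X (projT1 s) /\ projT2 s = projT2 (F (projT1 s))).
    split; [split|].
    + intros [x a] [Hx Ha]. simpl in Ha. subst a. exists x. split; auto.
      apply bisim_un. apply HF; auto.
    + intros x Hx. exists (existT _ x (projT2 (F x))). split; [simpl; auto|].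
      apply bisim_un. apply HF; auto.
    + rewrite tsat_sat. intros [x a] [Hx Ha]. simpl in Ha. subst a.
      apply sat_un. apply HF; auto.
  - intros (N & Y & [_ HB] & Hphi') x Hx. rewrite tsat_sat in Hphi'.
    destruct (HB x Hx) as (y & Hy & Hb).
    destruct (types_a Ql n N y) as (t & Ht & Hs).
    rewrite sat_bigor. exists (chi Ql n t). split.
    + apply in_map. apply HG. split; auto. exists N, y. auto.
    + pose proof (bisim_nbis _ _ _ _ _ Hb n) as Hn.
      apply (nbis_mono _ (fun q => In q Ql)) in Hn; [|intros q; rewrite HQl; auto].
      rewrite <- (invariance _ n _ (iok_chi _ Ql (fun q h => h) n t) n (le_n n) _ _ _ _ Hn). auto.
Qed.
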